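(* Let $A, C, D$ be binary random variables, with $A$ taking values $a,\overline{a}$, $C$ taking values $c,\overline{c}$, $D$ taking values $d,\overline{d}$, and let $Y$ be a real random variable with finite expectation. Suppose the joint distribution factorizes as \[ p(A,C,D,Y)=p(C)\,p(D\mid C)\,p(A\mid C)\,p(Y\mid A,C), \] and that every event $\{A=x, C=y, D=z\}$ has positive probability. Let $p(c)=0.5$ and $p(a\mid c)=p(\overline{a}\mid\overline{c})=p(d\mid c)=p(\overline{d}\mid\overline{c})\ge 0.5$. If \[ E[Y|a,c]-E[Y|a,\overline{c}]\ \le\ E[Y|\overline{a},\overline{c}]-E[Y|\overline{a},c]\ \le\ 0, \] then $RD_{crude}\le RD_{obs}\le RD_{true}$.
   Context: $RD_{true}=E[Y|a,c]p(c)+E[Y|a,\overline{c}]p(\overline{c})-E[Y|\overline{a},c]p(c)-E[Y|\overline{a},\overline{c}]p(\overline{c})$; $RD_{crude}=E[Y|a]-E[Y|\overline{a}]$; $RD_{obs}=E[Y|a,d]p(d)+E[Y|a,\overline{d}]p(\overline{d})-E[Y|\overline{a},d]p(d)-E[Y|\overline{a},\overline{d}]p(\overline{d})$. *)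

(* Defs.v *)
From HB Require Import structures.
From mathcomp Require Import all_boot all_order all_algebra.
From mathcomp Require Import all_classical all_reals all_analysis.

Set Implicit Arguments.
Unset Strict Implicit.
Unset Printing Implicit Defensive.

Import Order.TTheory GRing.Theory Num.Theory.
Local Open Scope classical_set_scope.
Local Open Scope ring_scope.

Section Defs.
Context {d : measure_display} {T : measurableType d} {R : realType}.
Variable P : probability T R.

Definition ev (X : T -> bool) (b : bool) : set T := [set t | X t = b].

Definition pr (S : set T) : R := fine (P S).

Definition cpr (S B : set T) : R := pr (S `&` B) / pr B.

Definition condE (Y : T -> R) (B : set T) : R :=
  fine (\int[P]_(x in B) (Y x)%:E) / pr B.
End Defs.

(* Main.v *)
Require Import Defs.
From HB Require Import structures.
From mathcomp Require Import all_boot all_order all_algebra.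
From mathcomp Require Import all_classical all_reals all_analysis.
From mathcomp Require Import ring lra.
Import Order.TTheory GRing.Theory Num.Theory.
Local Open Scope classical_set_scope.
Local Open Scope ring_scope.
Set Implicit Arguments. Unset Strict Implicit.
Section K.
Context d (T : measurableType d) (R : realType) (P : probability T R) (Y : T -> R)
  (mY : measurable_fun setT Y) (iY : P.-integrable setT (fun t => (Y t)%:E)).

Definition ZS (S : set T) := (Y \* \1_S)%R.
Lemma mZS {S} : measurable S -> measurable_fun setT (ZS S).
Proof. move=> mS; apply: measurable_realfun.measurable_funM => //; exact: measurable_indic. Qed.

Definition U0 : set R := ~` [set 0%R].
Lemma mU0 : measurable U0.
Proof. exact/measurableC. Qed.

Lemma ZS_pre S A : A `<=` U0 -> ZS S @^-1` A = S `&` Y @^-1` A.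
Proof.
move=> AU; apply/seteqP; split => x; rewrite /ZS /= indicE.
  case: (boolP (x \in S)) => xS /=; rewrite ?mulr1 ?mulr0.
    by move=> h; split => //; exact/set_mem.
  by move=> /AU; rewrite /U0 /=.
by move=> [/mem_set -> ?]; rewrite mulr1.
Qed.

Local Open Scope ereal_scope.

Lemma dummy : True. Proof. by []. Qed.
Lemma intZS S : measurable S ->
  \int[P]_(x in S) (Y x)%:E = \int[P]_(x in ZS S @^-1` U0) (EFin \o ZS S) x.
Proof.
move=> mS; rewrite integral_mkcond [RHS]integral_mkcond; apply: eq_integral => x _.
rewrite /patch /ZS /= !indicE; case: (boolP (x \in S)) => xS /=; rewrite ?mulr1 ?mulr0.
  have [->|Y0] := eqVneq (Y x) 0%R; first by case: ifP.
  by rewrite mem_set //= /U0 /= indicE xS mulr1; exact/eqP.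
by case: ifPn.
Qed.

Lemma integrableZS {S} : measurable S -> P.-integrable setT (EFin \o ZS S).
Proof.
move=> mS; have : P.-integrable S (fun t => (Y t)%:E) by apply: integrableS iY.
rewrite integrable_mkcond //; apply: eq_integrable => // x _.
by rewrite /patch /ZS /= indicE; case: (boolP (x \in S)) => /=; rewrite ?mulr1 ?mulr0.
Qed.

Lemma int_mscale (m : {measure set R -> \bar R}) (D : set R) (k : {nonneg R}) :
  measurable D -> m.-integrable D EFin ->
  \int[mscale k m]_(y in D) (y : R)%:E = k%:num%:E * \int[m]_(y in D) (y : R)%:E.
Proof.
move=> mD mi.
rewrite [in LHS]integralE [X in _ = _ * X]integralE.
have mE := @measurable_realfun.EFin_measurable R D.
rewrite (ge0_integral_mscale m mD k (measurable_realfun.measurable_funepos mE)); last by move=> *; exact: funepos_ge0.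
rewrite (ge0_integral_mscale m mD k (measurable_realfun.measurable_funeneg mE)); last by move=> *; exact: funeneg_ge0.
rewrite [RHS]muleBr //.
rewrite fin_num_adde_defr //.
exact: integrable_pos_fin_num.
Qed.

Lemma keyS (S S' : set T) (mS : measurable S) (mS' : measurable S') (k : {nonneg R})
  (h : forall B, measurable B -> P (S `&` Y @^-1` B) = k%:num%:E * P (S' `&` Y @^-1` B)) :
  \int[P]_(x in S) (Y x)%:E = k%:num%:E * \int[P]_(x in S') (Y x)%:E.
Proof.
have mpre : forall S0, measurable S0 -> measurable (ZS S0 @^-1` U0).
  by move=> S0 mS0; have := mZS mS0 measurableT mU0; rewrite setTI; exact.
have iZ : forall S0, measurable S0 -> P.-integrable (ZS S0 @^-1` U0) (EFin \o ZS S0).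
  by move=> S0 mS0; apply: integrableS (integrableZS mS0) => //; exact: mpre.
rewrite !intZS //.
rewrite -(integral_pushforward (mZS mS) (@measurable_realfun.EFin_measurable R setT) (iZ _ mS) mU0).
rewrite -(integral_pushforward (mZS mS') (@measurable_realfun.EFin_measurable R setT) (iZ _ mS') mU0).
rewrite -int_mscale //; last first.
  move=> H0; exact: (integrable_pushforward H0 (@measurable_realfun.EFin_measurable R setT) (iZ _ mS') mU0).
  exact: mU0.
move=> H0; apply: eq_measure_integral; first exact: mZS.
move=> H1 B mB BU.
  change (P (ZS S @^-1` B) = k%:num%:E * P (ZS S' @^-1` B)).
  by rewrite !ZS_pre // h.
exact: mZS.
Qed.
End K.

Section H.
Context d (T : measurableType d) (R : realType) (P : probability T R).

Lemma prE (S : set T) : measurable S -> P S = (pr P S)%:E.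
Proof. by move=> mS; rewrite /pr fineK // fin_num_measure. Qed.

Lemma pr_ge0 (S : set T) : (0 <= pr P S)%R.
Proof. by rewrite /pr fine_ge0 // measure_ge0. Qed.

Lemma mev (X : T -> bool) b : measurable_fun setT X -> measurable (ev X b).
Proof. by move=> mX; have := mX measurableT [set b] I; rewrite setTI. Qed.

Lemma ev_part (X : T -> bool) (S : set T) :
  S = (S `&` ev X true) `|` (S `&` ev X false).
Proof.
rewrite -setIUr; apply/seteqP; split => x /=; first by move=> Sx; split => //; rewrite /ev /=; case: (X x); [left|right].
by case.
Qed.

Lemma ev_disj (X : T -> bool) (S : set T) :
  (S `&` ev X true) `&` (S `&` ev X false) = set0.
Proof. by apply/seteqP; split => x //=; rewrite /ev /= => -[[_ ->] [_]]. Qed.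

Lemma split_pr (S : set T) (X : T -> bool) : measurable S -> measurable_fun setT X ->
  pr P S = (pr P (S `&` ev X true) + pr P (S `&` ev X false))%R.
Proof.
move=> mS mX.
have m1 : measurable (S `&` ev X true) by apply: measurableI => //; exact: mev.
have m2 : measurable (S `&` ev X false) by apply: measurableI => //; exact: mev.
apply: EFin_inj; rewrite EFinD -!prE // {1}(ev_part X S) measureU //.
exact: ev_disj.
Qed.

Variable (Y : T -> R) (mY : measurable_fun setT Y) (iY : P.-integrable setT (fun t => (Y t)%:E)).

Definition JJ (S : set T) := fine (\int[P]_(x in S) (Y x)%:E)%E.

Lemma fin_int (S : set T) : measurable S -> (\int[P]_(x in S) (Y x)%:E)%E \is a fin_num.
Proof. by move=> mS; apply: integrable_fin_num => //; exact: (integrableS measurableT mS (@subsetT _ S) iY). Qed.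

Lemma split_J (S : set T) (X : T -> bool) : measurable S -> measurable_fun setT X ->
  JJ S = (JJ (S `&` ev X true) + JJ (S `&` ev X false))%R.
Proof.
move=> mS mX.
have m1 : measurable (S `&` ev X true) by apply: measurableI => //; exact: mev.
have m2 : measurable (S `&` ev X false) by apply: measurableI => //; exact: mev.
rewrite /JJ -fineD; try exact: fin_int.
rewrite {1}(ev_part X S) integral_setU //; first by rewrite -ev_part; exact/measurable_realfun.measurable_EFinP/measurable_funTS.
by rewrite /disj_set ev_disj.
Qed.

Lemma condE_J (S : set T) : condE P Y S = (JJ S / pr P S)%R.
Proof. by []. Qed.
End H.

Lemma alg (R : realFieldType) (q m1 m2 m3 m4 : R) :
  1/2 <= q -> q < 1 -> m1 - m2 <= m4 - m3 ->
  (m1 * (q * (1 / 2)) + m2 * ((1 - q) * (1 / 2))) /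
  (q * (1 / 2) + (1 - q) * (1 / 2)) -
  (m3 * ((1 - q) * (1 / 2)) + m4 * (q * (1 / 2))) /
  ((1 - q) * (1 / 2) + q * (1 / 2)) <=
  (q * (m1 * (q * (1 / 2))) +
   (1 - q) * (m2 * ((1 - q) * (1 / 2)))) /
  (1 / 2 * q * q + 1 / 2 * (1 - q) * (1 - q)) *
  (q * (1 / 2) + (1 - q) * (1 / 2)) +
  ((1 - q) * (m1 * (q * (1 / 2))) +
   q * (m2 * ((1 - q) * (1 / 2)))) /
  (1 / 2 * (1 - q) * q + 1 / 2 * q * (1 - q)) *
  ((1 - q) * (1 / 2) + q * (1 / 2)) -
  (q * (m3 * ((1 - q) * (1 / 2))) + (1 - q) * (m4 * (q * (1 / 2)))) /
  (1 / 2 * q * (1 - q) + 1 / 2 * (1 - q) * q) *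
  (q * (1 / 2) + (1 - q) * (1 / 2)) -
  ((1 - q) * (m3 * ((1 - q) * (1 / 2))) + q * (m4 * (q * (1 / 2)))) /
  (1 / 2 * (1 - q) * (1 - q) + 1 / 2 * q * q) *
  ((1 - q) * (1 / 2) + q * (1 / 2)) <=
  m1 * (1 / 2) + m2 * (1 / 2) - m3 * (1 / 2) - m4 * (1 / 2).
Proof.
move=> hq q1 hK.
have q0 : 0 < q by lra.
have q1' : 0 < 1 - q by lra.
have N0 : 0 < q * q + (1 - q) * (1 - q) by nra.
have N0' : q * q + (1 - q) * (1 - q) != 0 by rewrite lt0r_neq0.
have qn : q != 0 by rewrite lt0r_neq0.
have qn' : 1 - q != 0 by rewrite lt0r_neq0.
have two : (2 : R) != 0 by rewrite pnatr_eq0.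
set s := q * q / (q * q + (1 - q) * (1 - q)).
have H1 : q * (1 / 2) + (1 - q) * (1 / 2) = 1 / 2 by ring.
have H2 : (1 - q) * (1 / 2) + q * (1 / 2) = 1 / 2 by ring.
have E1 : (m1 * (q * (1 / 2)) + m2 * ((1 - q) * (1 / 2))) / (1 / 2) = q * m1 + (1 - q) * m2.
  by field.
have E0 : (m3 * ((1 - q) * (1 / 2)) + m4 * (q * (1 / 2))) / (1 / 2) = (1 - q) * m3 + q * m4.
  by field.
have E2 : (q * (m1 * (q * (1 / 2))) + (1 - q) * (m2 * ((1 - q) * (1 / 2)))) /
  (1 / 2 * q * q + 1 / 2 * (1 - q) * (1 - q)) = s * m1 + (1 - s) * m2.
  by rewrite /s; field; rewrite ?N0' ?qn ?qn' ?two.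
have E4 : ((1 - q) * (m1 * (q * (1 / 2))) + q * (m2 * ((1 - q) * (1 / 2)))) /
  (1 / 2 * (1 - q) * q + 1 / 2 * q * (1 - q)) = (m1 + m2) / 2.
  have -> : 1 / 2 * (1 - q) * q + 1 / 2 * q * (1 - q) = q * (1 - q) by field.
  by field; rewrite qn qn'.
have E5 : (q * (m3 * ((1 - q) * (1 / 2))) + (1 - q) * (m4 * (q * (1 / 2)))) /
  (1 / 2 * q * (1 - q) + 1 / 2 * (1 - q) * q) = (m3 + m4) / 2.
  have -> : 1 / 2 * q * (1 - q) + 1 / 2 * (1 - q) * q = q * (1 - q) by field.
  by field; rewrite qn qn'.
have E6 : ((1 - q) * (m3 * ((1 - q) * (1 / 2))) + q * (m4 * (q * (1 / 2)))) /
  (1 / 2 * (1 - q) * (1 - q) + 1 / 2 * q * q) = (1 - s) * m3 + s * m4.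
  have -> : 1 / 2 * (1 - q) * (1 - q) + 1 / 2 * q * q = (q * q + (1 - q) * (1 - q)) / 2 by field.
  by rewrite /s; field; rewrite ?N0' ?qn ?qn' ?two.
rewrite H1 H2 E1 E0 E2 E4 E5 E6.
have hs1 : s <= 2 * q - 1 / 2.
  rewrite /s ler_pdivrMr //.
  have : 0 <= (2 * q - 1) ^+ 3 by rewrite exprn_ge0 //; lra.
  rewrite !exprS expr0 mulr1 => h; nra.
have hs0 : 1 / 2 <= s.
  rewrite /s ler_pdivlMr //; nra.
apply/andP; split; nra.
Qed.

Unset Implicit Arguments. Set Strict Implicit.

(* Value a (resp. c, d) is encoded as true, abar (resp. cbar, dbar) as false. *)
Theorem theorem3 (dT : measure_display) (T : measurableType dT) (R : realType)
  (P : probability T R) (A C D : T -> bool) (Y : T -> R)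
  (mA : measurable_fun setT A) (mC : measurable_fun setT C)
  (mD : measurable_fun setT D) (mY : measurable_fun setT Y)
  (iY : P.-integrable setT (fun t => (Y t)%:E))
  (* factorization p(A,C,D,Y) = p(C) p(D|C) p(A|C) p(Y|A,C) *)
  (fact : forall (x y z : bool) (B : set R), measurable B ->
     pr P (ev A x `&` ev C y `&` ev D z `&` Y @^-1` B)
     = pr P (ev C y) * cpr P (ev D z) (ev C y) * cpr P (ev A x) (ev C y)
       * cpr P (Y @^-1` B) (ev A x `&` ev C y))
  (* positivity *)
  (pos : forall x y z : bool, 0 < pr P (ev A x `&` ev C y `&` ev D z))
  (pc : pr P (ev C true) = 1 / 2)
  (e1 : cpr P (ev A true) (ev C true) = cpr P (ev A false) (ev C false))
  (e2 : cpr P (ev A false) (ev C false) = cpr P (ev D true) (ev C true))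
  (e3 : cpr P (ev D true) (ev C true) = cpr P (ev D false) (ev C false))
  (half : 1 / 2 <= cpr P (ev A true) (ev C true))
  (hY1 : condE P Y (ev A true `&` ev C true) - condE P Y (ev A true `&` ev C false)
         <= condE P Y (ev A false `&` ev C false) - condE P Y (ev A false `&` ev C true))
  (hY2 : condE P Y (ev A false `&` ev C false) - condE P Y (ev A false `&` ev C true)
         <= 0) :
  let E := condE P Y in
  let RD_true :=
    E (ev A true `&` ev C true) * pr P (ev C true)
    + E (ev A true `&` ev C false) * pr P (ev C false)
    - E (ev A false `&` ev C true) * pr P (ev C true)
    - E (ev A false `&` ev C false) * pr P (ev C false) in
  let RD_crude := E (ev A true) - E (ev A false) in
  let RD_obs :=
    E (ev A true `&` ev D true) * pr P (ev D true)
    + E (ev A true `&` ev D false) * pr P (ev D false)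
    - E (ev A false `&` ev D true) * pr P (ev D true)
    - E (ev A false `&` ev D false) * pr P (ev D false) in
  RD_crude <= RD_obs <= RD_true.
Proof.
cbv zeta.
have mAx x : measurable (ev A x) by exact: mev.
have mCx x : measurable (ev C x) by exact: mev.
have mDx x : measurable (ev D x) by exact: mev.
have mAC x y : measurable (ev A x `&` ev C y) by exact: measurableI.
have mACD x y z : measurable (ev A x `&` ev C y `&` ev D z) by apply: measurableI; [exact: mAC|exact: mDx].
have hpAC x y : 0 < pr P (ev A x `&` ev C y).
  by rewrite (split_pr P (mAC x y) mD) addr_gt0.
have hpC y : 0 < pr P (ev C y).
  rewrite (split_pr P (mCx y) mA) (setIC _ (ev A true)) (setIC _ (ev A false)).
  by rewrite addr_gt0.
have ha x y : cpr P (ev A x) (ev C y) * pr P (ev C y) = pr P (ev A x `&` ev C y).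
  by rewrite /cpr divfK // lt0r_neq0.
have hd z y : cpr P (ev D z) (ev C y) * pr P (ev C y) = pr P (ev D z `&` ev C y).
  by rewrite /cpr divfK // lt0r_neq0.
have hsa y : cpr P (ev A true) (ev C y) + cpr P (ev A false) (ev C y) = 1.
  rewrite /cpr -mulrDl (setIC (ev A true)) (setIC (ev A false)) -(split_pr P) //.
  by rewrite divff // lt0r_neq0.
have hsd y : cpr P (ev D true) (ev C y) + cpr P (ev D false) (ev C y) = 1.
  rewrite /cpr -mulrDl (setIC (ev D true)) (setIC (ev D false)) -(split_pr P) //.
  by rewrite divff // lt0r_neq0.
have hc : pr P (ev C true) + pr P (ev C false) = 1.
  have := split_pr P measurableT mC; rewrite !setTI => <-.
  by rewrite /pr probability_setT.
have hcell x y z : pr P (ev A x `&` ev C y `&` ev D z)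
    = pr P (ev C y) * cpr P (ev D z) (ev C y) * cpr P (ev A x) (ev C y).
  have := fact x y z setT measurableT; rewrite preimage_setT setIT => ->.
  by rewrite /cpr setTI divff ?mulr1 // lt0r_neq0.
have hm x y : JJ P Y (ev A x `&` ev C y)
    = condE P Y (ev A x `&` ev C y) * pr P (ev A x `&` ev C y).
  by rewrite condE_J divfK // lt0r_neq0.
have hJcell x y z : JJ P Y (ev A x `&` ev C y `&` ev D z)
    = cpr P (ev D z) (ev C y) * JJ P Y (ev A x `&` ev C y).
  have k0 : 0 <= cpr P (ev D z) (ev C y) by rewrite /cpr divr_ge0 // pr_ge0.
  rewrite /JJ (keyS mY iY (mACD x y z) (mAC x y) (k := NngNum k0)); last first.
    move=> B mB.
    have mYB : measurable (Y @^-1` B) by have := mY measurableT B mB; rewrite setTI.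
    rewrite !(prE P) //; try by apply: measurableI.
    rewrite fact //; congr (_%:E).
    rewrite /= /cpr (setIC (Y @^-1` B)).
    have h1 := hpC y; have h2 := hpAC x y.
    field; rewrite !lt0r_neq0 //.
  have := fin_int iY (mAC x y).
  by case: (\int[P]_(x0 in _) _)%E.
have hEA x : condE P Y (ev A x) =
    (condE P Y (ev A x `&` ev C true) * pr P (ev A x `&` ev C true)
     + condE P Y (ev A x `&` ev C false) * pr P (ev A x `&` ev C false))
    / (pr P (ev A x `&` ev C true) + pr P (ev A x `&` ev C false)).
  by rewrite [LHS]condE_J (split_J mY iY (mAx x) mC) (split_pr P (mAx x) mC) !hm.
have hEAD x z : condE P Y (ev A x `&` ev D z) =
    (cpr P (ev D z) (ev C true) * (condE P Y (ev A x `&` ev C true) * pr P (ev A x `&` ev C true))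
     + cpr P (ev D z) (ev C false) * (condE P Y (ev A x `&` ev C false) * pr P (ev A x `&` ev C false)))
    / (pr P (ev A x `&` ev C true `&` ev D z) + pr P (ev A x `&` ev C false `&` ev D z)).
  have mAD : measurable (ev A x `&` ev D z) by exact: measurableI.
  rewrite [LHS]condE_J (split_J mY iY mAD mC) (split_pr P mAD mC).
  rewrite (setIAC (ev A x) (ev D z) (ev C true)) (setIAC (ev A x) (ev D z) (ev C false)).
  by rewrite !hJcell !hm.
have hDz z : pr P (ev D z) = pr P (ev D z `&` ev C true) + pr P (ev D z `&` ev C false).
  exact: split_pr.
have hcf : pr P (ev C false) = 1 / 2 by move: hc; rewrite pc; lra.
set q := cpr P (ev A true) (ev C true).
have aff : cpr P (ev A false) (ev C false) = q by rewrite -e1.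
have dtt : cpr P (ev D true) (ev C true) = q by rewrite -e2 -e1.
have dff : cpr P (ev D false) (ev C false) = q by rewrite -e3 -e2 -e1.
have aft : cpr P (ev A false) (ev C true) = 1 - q by have := hsa true; rewrite -/q; lra.
have atf : cpr P (ev A true) (ev C false) = 1 - q by have := hsa false; rewrite aff; lra.
have dft : cpr P (ev D false) (ev C true) = 1 - q by have := hsd true; rewrite dtt; lra.
have dtf : cpr P (ev D true) (ev C false) = 1 - q by have := hsd false; rewrite dff; lra.
have q1 : q < 1.
  have := hpAC false true; rewrite -ha aft pc => h.
  by rewrite -subr_gt0; rewrite pmulr_lgt0 // in h.
have q0 : 0 < q.
  by apply: lt_le_trans half; lra.
rewrite !hEA !hEAD !hDz !hcell -!hd -!ha pc hcf aff dtt dff aft atf dft dtf.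
set m1 := condE P Y (ev A true `&` ev C true).
set m2 := condE P Y (ev A true `&` ev C false).
set m3 := condE P Y (ev A false `&` ev C true).
set m4 := condE P Y (ev A false `&` ev C false).
rewrite -/q.
exact: alg.
Qed.
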